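(* Let $C$ be a supersingular curve of genus $g$ over $\mathbb{F}_q$, and write its normalized Weil numbers as $\zeta_{k_1}^{t_1},\ldots,\zeta_{k_{2g}}^{t_{2g}}$, where $\zeta_k=e^{2\pi i/k}$, $k_j\geq 1$, and $\gcd(k_j,t_j)=1$ for each $j$. Let $r$ be a positive integer. Then $C$ is maximal over $\mathbb{F}_{q^r}$ if and only if (i) there exist an integer $s\geq 1$ and odd integers $b_1,\ldots,b_{2g}$ such that $k_j=2^s b_j$ for all $1\le j\le 2g$ (with the same $s$ for all $j$), and (ii) $r$ is an odd multiple of $2^{s-1}\operatorname{lcm}(b_1,\ldots,b_{2g})$.
   Context: For a smooth projective curve $C$ of genus $g$ over $\mathbb{F}_q$, the zeta function is $Z(C/\mathbb{F}_q,T)=\exp\big(\sum_{s\ge1} \#C(\mathbb{F}_{q^s})T^s/s\big)=\frac{L(T)}{(1-T)(1-qT)}$ with $L(T)=\prod_{i=1}^{2g}(1-\alpha_iT)\in\mathbb{Z}[T]$, $|\alpha_i|=\sqrt q$. The normalized Weil numbers of $C/\mathbb{F}_q$ are $\alpha_i/\sqrt q$; those of $C/\mathbb{F}_{q^r}$ are their $r$-th powers. $C$ is supersingular if all normalized Weil numbers are roots of unity. $C$ is maximal over $\mathbb{F}_{Q}$ if $\#C(\mathbb{F}_Q)=1+Q+2g\sqrt{Q}$, which holds if and only if all normalized Weil numbers of $C/\mathbb{F}_Q$ equal $-1$. *)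

(* Defs.v *)
From HB Require Import structures.
From mathcomp Require Import all_boot all_order all_algebra all_field.
Set Implicit Arguments. Unset Strict Implicit. Unset Printing Implicit Defensive.
Import Order.TTheory GRing.Theory Num.Theory.
Local Open Scope ring_scope.

(* A curve C of genus g over F_q is represented through its Weil data:
   the reciprocal roots alpha_1..alpha_{2g} of L(T) (in algC) and its
   point-count function N s = #C(F_{q^s}). *)

Definition prime_power (q : nat) : Prop :=
  exists p e : nat, [/\ prime p, (0 < e)%N & q = (p ^ e)%N].

Definition weil_numbers (q g : nat) (alpha : 'I_(2 * g) -> algC) : Prop :=
  (\prod_(i < 2 * g) (1 - alpha i *: 'X) \is a polyOver Num.int) /\
  (forall i, `|alpha i| = sqrtC (q%:R)).

(* Z(C/F_q, T) = exp(sum_s N s T^s / s) = L(T)/((1-T)(1-qT)), i.e.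
   N s = 1 + q^s - sum_i alpha_i^s for all s >= 1. *)
Definition zeta_counts (q g : nat) (alpha : 'I_(2 * g) -> algC) (N : nat -> nat) : Prop :=
  forall s : nat, (0 < s)%N ->
    (N s)%:R = 1 + (q ^ s)%:R - \sum_(i < 2 * g) alpha i ^+ s :> algC.

Definition normalized (q g : nat) (alpha : 'I_(2 * g) -> algC) (i : 'I_(2 * g)) : algC :=
  alpha i / sqrtC (q%:R).

Definition supersingular (q g : nat) (alpha : 'I_(2 * g) -> algC) : Prop :=
  forall i, exists n : nat, (0 < n)%N /\ normalized q alpha i ^+ n = 1.

(* zeta_k = e^{2 pi i / k}: k.-root (-1) is the k-th root of -1 with
   minimal nonnegative argument, namely e^{i pi / k}. *)
Definition zeta (k : nat) : algC := (k.-root (-1)) ^+ 2.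

Definition maximal_over (q g : nat) (N : nat -> nat) (r : nat) : Prop :=
  (N r)%:R = 1 + (q ^ r)%:R + (2 * g)%:R * sqrtC ((q ^ r)%:R) :> algC.

(* Main.v *)
Require Import Defs.
From HB Require Import structures.
From mathcomp Require Import all_boot all_order all_algebra all_field.
From mathcomp Require Import ring zify.
Import Order.TTheory GRing.Theory Num.Theory.
Local Open Scope ring_scope.

Section NumberTheory.
Local Close Scope ring_scope.
Lemma dec2 {n} : 0 < n -> n = 2 ^ logn 2 n * (n %/ 2 ^ logn 2 n) /\ odd (n %/ 2 ^ logn 2 n).
Proof.
move=> n0; have h := pfactor_dvdnn 2 n.
split; first by rewrite mulnC divnK.
apply/negPn/negP => ev.
have : 2 ^ (logn 2 n).+1 %| n.
  rewrite -{2}(divnK h) expnSr mulnC dvdn_pmul2r ?expn_gt0 //.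
  by rewrite dvdn2 ev.
by rewrite pfactor_dvdn // ltnn.
Qed.

Lemma core a b v o : odd b -> odd o -> 2 ^ a * b %| 2 * (2 ^ v * o) -> ~~ (2 ^ a * b %| 2 ^ v * o) ->
  a = v.+1 /\ b %| o.
Proof.
move=> ob oo h1 h2.
have e1 : 2 * (2 ^ v * o) = 2 ^ v.+1 * o by rewrite expnS mulnA.
rewrite e1 in h1.
have bo : b %| o.
  have := dvdn_mull (2 ^ a) (dvdnn b); move/dvdn_trans => /(_ _ h1).
  by rewrite Gauss_dvdr // coprime_sym coprimeXl // coprime2n.
have al : a <= v.+1.
  have := dvdn_mulr b (dvdnn (2 ^ a)); move/dvdn_trans => /(_ _ h1).
  by rewrite Gauss_dvdl ?coprimeXl ?coprime2n // dvdn_Pexp2l.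
split => //; apply/eqP; rewrite eqn_leq al /=; apply: contraR h2; rewrite -leqNgt => av.
by apply: dvdn_mul => //; rewrite dvdn_Pexp2l.
Qed.

Lemma odd_biglcm n (b : 'I_n -> nat) : (forall j, odd (b j)) -> odd (\big[lcmn/1]_(j < n) b j).
Proof.
move=> ob; apply: (big_ind odd) => // x y ox oy.
apply: (@dvdn_odd _ (x * y)); last by rewrite oddM ox oy.
by rewrite -muln_lcm_gcd dvdn_mulr.
Qed.

Lemma numth (n : nat) (k : 'I_n -> nat) (r : nat) : 0 < r -> (forall j, 0 < k j) ->
 (forall j, (k j %| 2 * r) && ~~ (k j %| r)) <->
 (exists (s : nat) (b : 'I_n -> nat), [/\ 1 <= s, (forall j, odd (b j)), (forall j, k j = 2 ^ s * b j) &
    exists m : nat, odd m /\ r = m * (2 ^ (s - 1) * \big[lcmn/1%N]_(j < n) b j)]).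
Proof.
move=> r0 k0; split.
  move=> H.
  have [er or] := dec2 r0.
  set v := logn 2 r in er or; set o := r %/ 2 ^ v in er or.
  pose b j := k j %/ 2 ^ logn 2 (k j).
  have Hj j : logn 2 (k j) = v.+1 /\ b j %| o.
    have [ek ok] := dec2 (k0 j).
    have /andP[h1 h2] := H j.
    rewrite ek er in h1 h2.
    exact: core ok or h1 h2.
  exists v.+1, b; split => //.
  - by move=> j; have [] := dec2 (k0 j).
  - by move=> j; have [ek _] := dec2 (k0 j); rewrite {1}ek /b (proj1 (Hj j)).
  set L := \big[lcmn/1%N]_(j < n) b j.
  have Lo : L %| o by apply/dvdn_biglcmP => j _; exact: (proj2 (Hj j)).
  exists (o %/ L); split.
    apply: (@dvdn_odd _ o) => //; apply/dvdnP; exists L; by rewrite mulnC divnK.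
  by rewrite subSS subn0 {1}er mulnCA divnK.
case=> s [b [s1 ob kb [m [om rm]]]] j.
set L := \big[lcmn/1%N]_(j < n) b j in rm.
have bL : b j %| L by move: (dvdnn L); move/dvdn_biglcmP => /(_ j isT).
have oL : odd L by exact: odd_biglcm.
have es : 2 ^ s = 2 * 2 ^ (s - 1) by rewrite -expnS; congr (2 ^ _); lia.
apply/andP; split.
  rewrite kb rm es.
  have -> : 2 * (m * (2 ^ (s - 1) * L)) = (2 * 2 ^ (s - 1)) * (m * L) by ring.
  by apply: dvdn_mul => //; apply: dvdn_mull.
apply/negP; rewrite kb rm => h.
have : 2 ^ s %| 2 ^ (s - 1) * (m * L).
  have e : 2 ^ (s - 1) * (m * L) = m * (2 ^ (s - 1) * L) by ring.
  by rewrite e; apply: dvdn_trans h; apply: dvdn_mulr.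
rewrite Gauss_dvdl ?coprimeXl ?coprime2n ?oddM ?om ?oL // dvdn_Pexp2l //.
lia.
Qed.

End NumberTheory.

Lemma norm_sub1_sqr (x : algC) : `|x| = 1 -> `|x - 1| ^+ 2 = 2 - (x + x^*).
Proof.
move=> nx; rewrite normCK rmorphB rmorph1 mulrBl !mulrBr -normCK nx.
by rewrite expr1n mulr1 mul1r; rewrite opprB addrC [RHS]addrC; ring.
Qed.

Lemma norm_root_unit {x w : algC} {e : nat} : (0 < e)%N -> x ^+ e = w -> `|w| = 1 -> `|x| = 1.
Proof.
move=> e0 xe nw; apply/eqP; rewrite -(pexpr_eq1 e0) ?normr_ge0 //.
by rewrite -normrX xe nw.
Qed.

Lemma geom_sum0 (x : algC) (e : nat) : x ^+ e = 1 -> x != 1 -> \sum_(i < e) x ^+ i = 0.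
Proof.
move=> xe x1; have := subrX1 x e; rewrite xe subrr => /esym/eqP.
by rewrite mulf_eq0 subr_eq0 (negPf x1) /= => /eqP.
Qed.

Lemma real_addconj (x : algC) : x + x^* \is Num.real.
Proof. by rewrite CrealE raddfD /= conjCK addrC. Qed.

Lemma lemW (e : nat) (w : algC) : (2 <= e)%N -> `|w| = 1 -> w != 1 ->
  exists r, r ^+ e = w /\ w + w^* < r + r^*.
Proof.
move=> e2 nw w1; have e0 : (0 < e)%N by apply: leq_trans e2.
have [rho prho] := C_prim_root_exists e0.
pose r0 := e.-root w; have r0e : r0 ^+ e = w by rewrite /r0 rootCK.
pose z (a : 'I_e) := r0 * rho ^+ a.
have ze a : z a ^+ e = w.
  by rewrite /z exprMn r0e -exprM mulnC exprM (prim_expr_order prho) expr1n mulr1.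
have nz a : `|z a| = 1 by exact: (norm_root_unit e0 (ze a) nw).
pose P a := \sum_(i < e) z a ^+ i.
have keyP a : (z a - 1) * P a = w - 1 by rewrite /P -subrX1 ze.
have sumP : \sum_a P a = e%:R.
  rewrite /P exchange_big /= (bigD1 (Ordinal e0)) //= [X in _ + X]big1 => [|i /= i0].
    rewrite addr0 (eq_bigr (fun _ => 1)) => [|a _]; last by rewrite expr0.
    by rewrite sumr_const card_ord.
  rewrite /z (eq_bigr (fun a : 'I_e => r0 ^+ i * (rho ^+ i) ^+ a)) => [|a _]; last first.
    by rewrite exprMn -!exprM mulnC.
  rewrite -mulr_sumr geom_sum0 ?mulr0 //.
    by rewrite -exprM mulnC exprM (prim_expr_order prho) expr1n.
  rewrite -(prim_order_dvd prho); apply/negP => /(dvdn_leq _) H.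
  have : (0 < i)%N by rewrite lt0n; apply: contra i0 => /eqP i0; apply/eqP/val_inj.
  by move=> ip; move: (H ip); rewrite leqNgt ltn_ord.
case: (pickP (fun a => w + w^* < z a + (z a)^*)) => [a Ha | H0].
  by exists (z a); split.
exfalso.
have z1 a : z a != 1.
  by apply: contra w1 => /eqP za; rewrite -(ze a) za expr1n.
have Hle a : `|P a| <= 1.
  have h1 : `|w - 1| <= `|z a - 1|.
    rewrite -ler_sqr ?nnegrE ?normr_ge0 // norm_sub1_sqr // norm_sub1_sqr //.
    by rewrite lerD2l lerN2 real_leNgt ?H0 ?real_addconj.
  have h2 : 0 < `|z a - 1| by rewrite normr_gt0 subr_eq0.
  by rewrite -(ler_pM2l h2) mulr1 -normrM keyP.
have Hsum : \sum_a `|P a| = e%:R.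
  apply/eqP; rewrite eq_le; apply/andP; split.
    apply: le_trans (ler_sum _ (fun a _ => Hle a)) _; by rewrite sumr_const card_ord.
  by rewrite -[X in X <= _]normr_nat -sumP ler_norm_sum.
have Hone a : `|P a| = 1.
  have hs : \sum_(b | xpredT b) (1 - `|P b|) = 0.
    by rewrite sumrB Hsum sumr_const card_ord subrr.
  have := @psumr_eq0P _ _ xpredT (fun b => 1 - `|P b|) (fun b _ => ltac:(by rewrite subr_ge0 Hle)) hs a isT.
  by move/eqP; rewrite subr_eq0 eq_sym => /eqP.
have [t _ Ht] := @normC_sum_eq1 _ _ xpredT P ltac:(by rewrite sumP Hsum normr_nat) (fun a _ => Hone a).
have t1 : t = 1.
  move: sumP; rewrite (eq_bigr (fun _ => t)) => [|a _]; last by rewrite Ht.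
  rewrite sumr_const card_ord -mulr_natl => h.
  have enz : (e%:R : algC) != 0 by rewrite pnatr_eq0 -lt0n e0.
  apply: (mulfI enz); by rewrite mulr_natl h mulr1.
have zw a : z a = w.
  by move: (keyP a); rewrite Ht // t1 mulr1 => /eqP; rewrite (inj_eq (addIr _)) => /eqP.
have e1 : (1 < e)%N by [].
have := zw (Ordinal e0); rewrite -(zw (Ordinal e1)) /z /= expr0 expr1 mulr1 => /eqP.
rewrite -subr_eq0 -{1}[r0]mulr1 -mulrBr mulf_eq0 => /orP[].
  rewrite /r0 rootC_eq0 // => /eqP w0; move: nw; rewrite w0 normr0 => /eqP; by rewrite eq_sym oner_eq0.
rewrite subr_eq0 eq_sym -[rho]expr1 -(prim_order_dvd prho) dvdn1 => /eqP e1'.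
by move: e2; rewrite e1'.
Qed.

Lemma rootC_max n (x z : algC) : (0 < n)%N -> z ^+ n = x -> argCle (n.-root x) z.
Proof. move=> n0 zx; rewrite /nthroot; case: (rootC_subproof n x) => y _ H; exact: H. Qed.

Lemma nnegImE (x : algC) : nnegIm x = (0 <= 'Im x).
Proof.
have h2 : 0 < (2:algC)^-1 by rewrite invr_gt0 ltr0n.
by rewrite /nnegIm ImE (pmulr_lge0 _ h2).
Qed.

Lemma N1_neq1 : (-1 : algC) != 1.
Proof. by rewrite -subr_eq0 -opprD oppr_eq0 (pnatr_eq0 _ 2). Qed.

Lemma rootN1_prim k : (0 < k)%N -> (2 * k).-primitive_root (k.-root (-1 : algC)).
Proof.
move=> k0; set y := k.-root (-1 : algC).
have yk : y ^+ k = -1 by rewrite /y rootCK.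
have y2k : y ^+ (2 * k) = 1 by rewrite mulnC exprM yk sqrrN expr1n.
have k2 : (0 < 2 * k)%N by rewrite muln_gt0.
have [d pd dd] := prim_order_exists k2 y2k.
case: (d =P (2 * k)%N) => [de|dne]; first by move: pd; rewrite de.
exfalso.
have ndk : ~~ (d %| k)%N by rewrite (prim_order_dvd pd) yk N1_neq1.
case/div.dvdnP: dd => m hm.
have modd : odd m.
  apply/negPn/negP => me; apply: (negP ndk).
  have hk : k = (m./2 * d)%N.
    apply/eqP; rewrite -(eqn_pmul2l (isT : (0 < 2)%N)) hm -{1}(odd_double_half m) (negbTE me) add0n -muln2; apply/eqP; ring.
  by rewrite hk dvdn_mull.
have deven : ~~ odd d.
  by apply/negP => od; have := congr1 odd hm; rewrite !oddM modd od.
set k' := d./2.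
have dk' : d = (2 * k')%N by rewrite /k' -{1}(odd_double_half d) (negPf deven) add0n -muln2 mulnC.
have kk : k = (m * k')%N by apply/eqP; rewrite -(eqn_pmul2l (isT : (0 < 2)%N)) hm dk'; apply/eqP; ring.
have m2 : (2 <= m)%N.
  case: m hm modd kk => [|[|m']] // hm _ _.
  by move: dne; rewrite hm mul1n.
have d0 : (0 < d)%N by apply: (prim_order_gt0 pd).
have yk' : y ^+ k' = -1.
  have : (y ^+ k') ^+ 2 == 1 by rewrite -exprM mulnC -dk' (prim_expr_order pd).
  rewrite sqrf_eq1 => /orP[|/eqP //].
  rewrite -(prim_order_dvd pd) => /(dvdn_leq _) H.
  have k'0 : (0 < k')%N by move: d0; rewrite dk' muln_gt0.
  by move: (H k'0); rewrite dk' leqNgt -{1}(mul1n k') ltn_pmul2r.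
have ny : `|y| = 1 by apply: (norm_root_unit k0 yk); rewrite normrN normr1.
have y1 : y != 1 by apply: contra N1_neq1 => /eqP y1; rewrite -yk y1 expr1n.
have [r [rm ry]] := @lemW m y m2 ny y1.
have rk : r ^+ k = -1 by rewrite kk exprM rm yk'.
have key z : z ^+ k = -1 -> 0 <= 'Im z -> z + z^* <= y + y^*.
  move=> zk zi; have := @rootC_max k (-1) z k0 zk; rewrite /argCle nnegImE zi /=.
  by case/andP.
have : (0 <= 'Im r) || (0 <= 'Im r^*).
  by rewrite Im_conj oppr_ge0 orbC; apply: (real_leVge (Creal_Im r) (real0 _)).
case/orP => [/(key r rk) h|h].
  by have := lt_le_trans ry h; rewrite ltxx.
have rk' : r^* ^+ k = -1 by rewrite -rmorphXn rk rmorphN1.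
have := key _ rk' h; rewrite conjCK addrC => h'.
by have := lt_le_trans ry h'; rewrite ltxx.
Qed.

Lemma zeta_prim k : (0 < k)%N -> k.-primitive_root (zeta k).
Proof.
move=> k0; have := exp_prim_root (@rootN1_prim k k0) 2%N.
have -> : gcdn 2 (2 * k) = 2%N by apply/gcdn_idPl; apply: dvdn_mulr.
by rewrite mulKn.
Qed.

Lemma prim_exprz n (z : algC) (t : int) : n.-primitive_root z -> coprimez n%:Z t ->
  n.-primitive_root (z ^ t).
Proof.
move=> pz; case: t => m hc.
  change (z ^ Posz m) with (z ^+ m).
  by rewrite prim_root_exp_coprime // coprime_sym.
have n0 := prim_order_gt0 pz.
change (z ^ Negz m) with ((z ^+ m.+1)^-1).
have px : n.-primitive_root (z ^+ m.+1) by rewrite prim_root_exp_coprime // coprime_sym.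
set x := z ^+ m.+1 in px *.
have x0 : x != 0 by rewrite (prim_root_eq0 px) -lt0n.
have -> : x^-1 = x ^+ n.-1.
  apply: (mulIf x0); rewrite mulVf // -exprSr prednK //; exact: (esym (prim_expr_order px)).
rewrite prim_root_exp_coprime //.
by rewrite -{2}(prednK n0) coprimenS.
Qed.

Lemma pow_eqN1 n (w : algC) r : n.-primitive_root w ->
  (w ^+ r = -1) <-> ((n %| 2 * r)%N && ~~ (n %| r)%N).
Proof.
move=> pw; rewrite !(prim_order_dvd pw); split.
  by move=> wr; rewrite mulnC exprM wr sqrrN expr1n eqxx /= N1_neq1.
case/andP => h1 h2; move: h1; rewrite mulnC exprM sqrf_eq1 (negPf h2) /=.
by move/eqP.
Qed.

Theorem mainTheorem1 (q g : nat) (alpha : 'I_(2 * g) -> algC) (N : nat -> nat)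
  (hq : prime_power q) (hW : weil_numbers q alpha) (hN : zeta_counts q alpha N)
  (hss : supersingular q alpha)
  (k : 'I_(2 * g) -> nat) (t : 'I_(2 * g) -> int)
  (hk : forall j, (1 <= k j)%N)
  (hkt : forall j, coprimez (k j)%:Z (t j))
  (hrep : forall j, normalized q alpha j = zeta (k j) ^ t j)
  (r : nat) (hr : (0 < r)%N) :
  maximal_over q g N r <->
  (exists (s : nat) (b : 'I_(2 * g) -> nat),
     [/\ (1 <= s)%N,
         (forall j, odd (b j)),
         (forall j, k j = (2 ^ s * b j)%N) &
         exists m : nat, odd m /\ r = (m * (2 ^ (s - 1) * \big[lcmn/1%N]_(j < 2 * g) b j))%N]).
Proof.
have q0 : (0 < q)%N by case: hq => p [e [pp e0 ->]]; rewrite expn_gt0 prime_gt0.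
set w := normalized q alpha.
have pw j : (k j).-primitive_root (w j).
  by rewrite /w hrep; apply: prim_exprz (hkt j); apply: zeta_prim.
have B : (forall j, w j ^+ r = -1) <-> (forall j, (k j %| 2 * r)%N && ~~ (k j %| r)%N).
  by split => H j; [apply/(@pow_eqN1 _ _ r (pw j))/H | apply/(@pow_eqN1 _ _ r (pw j))/H].
apply: iff_trans (iff_trans B (@numth _ k r hr hk))=> {B}.
have s0 : sqrtC (q%:R : algC) != 0 by rewrite rootC_eq0 // pnatr_eq0 -lt0n.
have ae j : alpha j = w j * sqrtC q%:R by rewrite /w /normalized divfK.
have Ms : sqrtC ((q ^ r)%:R : algC) = sqrtC q%:R ^+ r by rewrite natrX rootCX // ler0n.
set M := sqrtC (q%:R : algC) ^+ r in Ms.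
have M0 : M != 0 by rewrite expf_neq0.
have sumE : \sum_j alpha j ^+ r = (\sum_j w j ^+ r) * M.
  by rewrite mulr_suml; apply: eq_bigr => j _; rewrite ae exprMn.
rewrite /maximal_over (hN r hr) Ms sumE; split.
  move/addrI => h.
  have hs : \sum_j w j ^+ r = - (2 * g)%:R.
    by apply: (mulIf M0); rewrite mulNr -h opprK.
  move=> j.
  have nw i : `|w i ^+ r| = 1.
    rewrite normrX (norm_root_unit (prim_order_gt0 (pw i)) (prim_expr_order (pw i))) ?normr1 ?expr1n //.
  have [c _ Hc] := @normC_sum_eq1 _ _ xpredT (fun i => w i ^+ r)
    ltac:(by rewrite hs normrN normr_nat (eq_bigr (fun _ => 1)) ?sumr_const ?card_ord // => i _; exact: nw)
    (fun i _ => nw i).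
  move: hs; rewrite (eq_bigr (fun _ => c)) => [|i _]; last by rewrite Hc.
  rewrite sumr_const card_ord -mulr_natl => hc.
  have g0 : (0 < 2 * g)%N by apply: leq_ltn_trans (ltn_ord j).
  have gnz : ((2 * g)%:R : algC) != 0 by rewrite pnatr_eq0 -lt0n.
  rewrite Hc //; apply: (mulfI gnz); by rewrite mulr_natl hc mulr1 mulrN1.
move=> H; rewrite (eq_bigr (fun _ => -1)) => [|j _]; last exact: H.
by rewrite sumr_const card_ord mulNrn mulNr opprK.
Qed.
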